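(* Let $b,k>0$, $0<c<1$, $R_0>0$, $\bar\varrho>0$ be constants. Let $\mathring\varrho,\mathring n,\mathring\Pi$ be functions on $\mathbb{R}^3$ with $\mathring\varrho+p(\mathring\varrho,\mathring n)+\mathring\Pi>0$, and let $\mathbf u_1$ be a smooth vector field supported in $B_{R_0}$ with $$\int_{B_{R_0}}\mathbf x\cdot\mathbf u_1|\mathbf u_1|(\mathring\varrho+\mathring p+\mathring\Pi)\,dx>R_0\frac{(c+1)^2}{2(c^2+1)}\int_{B_{R_0}}|\mathbf u_1|^2(\mathring\varrho+\mathring p+\mathring\Pi)\,dx,$$ where $\mathring p=p(\mathring\varrho,\mathring n)$. For $\sigma>0$ set $\mathring{\mathbf u}=\sigma\mathbf u_1$, $E=\int_{B_{R_0}}\big((\mathring\varrho+\mathring p+\mathring\Pi)|\mathring{\mathbf u}|^2+\mathring\varrho-\bar\varrho\big)dx$ and $Q(0)=\int_{B_{R_0}}\mathbf x\cdot\mathring{\mathbf u}\sqrt{1+|\mathring{\mathbf u}|^2}(\mathring\varrho+\mathring p+\mathring\Pi)\,dx$. Then there exists $\bar R>R_0$ such that for all sufficiently large $\sigma>0$, with $A=c\big(1+\frac{3b\bar R^3}{E+b\bar R^3}\big)$, $B=\frac{k\bar R^3}{E+b\bar R^3}$ and $z_0=\frac{A(1-B)+\sqrt{A^2+2B-B^2}}{A^2+1}$, the following hold: $A^2+2B-B^2>0$, $A+B<1$, $z_0<1$, $\int_{\frac12+\frac{z_0}2}^1\frac{dz}{1-\sqrt{1-z^2}-Az-B}<\log(\bar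 R/R_0)$, and $\frac{Q(0)}{R_0(E+bR_0^3)}>\frac{z_0}2+\frac12$.
   Context: $B_R=\{x\in\mathbb{R}^3:|x|<R\}$; $p=p(\varrho,n)$ is a given pressure function (equation of state). *)

(* Defs.v *)
From HB Require Import structures.
From mathcomp Require Import all_boot all_order all_algebra.
From mathcomp Require Import all_classical all_reals all_analysis.
Set Implicit Arguments. Unset Strict Implicit. Unset Printing Implicit Defensive.
Import Order.TTheory GRing.Theory Num.Theory.
Import numFieldNormedType.Exports.
Local Open Scope classical_set_scope.
Local Open Scope ring_scope.

Definition R3 (R : realType) := (R * R * R)%type.

Definition dot3 {R : realType} (x y : R3 R) : R :=
  x.1.1 * y.1.1 + x.1.2 * y.1.2 + x.2 * y.2.

Definition enorm3 {R : realType} (x : R3 R) : R := Num.sqrt (dot3 x x).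

Definition ball3 {R : realType} (r : R) : set (R3 R) := [set x | enorm3 x < r].

Definition leb3 (R : realType) :=
  (((@lebesgue_measure R) \x (@lebesgue_measure R))%E \x (@lebesgue_measure R))%E.

Fixpoint iterD {R : realType} {V W : normedModType R} (vs : seq V) (f : V -> W)
  : V -> W :=
  match vs with
  | [::] => f
  | v :: vs' => fun x => 'D_v (iterD vs' f) x
  end.

Definition smooth {R : realType} {V W : normedModType R} (f : V -> W) : Prop :=
  forall (vs : seq V) (x : V), differentiable (iterD vs f) x.

Definition supported_in {R : realType} (u : R3 R -> R3 R) (S : set (R3 R)) :=
  closure [set x | u x != 0] `<=` S.
Arguments leb3 : clear implicits.

(* Main.v *)
Require Import Defs.
From HB Require Import structures.
From mathcomp Require Import all_boot all_order all_algebra.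
From mathcomp Require Import all_classical all_reals all_analysis.
From mathcomp Require Import ring lra measurable_realfun.
Import Order.TTheory GRing.Theory Num.Theory.
Import numFieldNormedType.Exports.
Local Open Scope classical_set_scope.
Local Open Scope ring_scope.

Section Real.
Variable R : realType.

Lemma D_lower (A B z : R) : 0 <= A -> 0 <= B -> A + B < 1 ->
  0 < A ^+ 2 + 2 * B - B ^+ 2 ->
  (A * (1 - B) + Num.sqrt (A ^+ 2 + 2 * B - B ^+ 2)) / (A ^+ 2 + 1) <= z ->
  z <= 1 ->
  (z - (A * (1 - B) + Num.sqrt (A ^+ 2 + 2 * B - B ^+ 2)) / (A ^+ 2 + 1)) ^+ 2 / 2
  <= 1 - Num.sqrt (1 - z ^+ 2) - A * z - B.
Proof.
move=> A0 B0 AB disc.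
set s := Num.sqrt _.
have s0 : 0 <= s by exact: sqrtr_ge0.
have s2 : s ^+ 2 = A ^+ 2 + 2 * B - B ^+ 2 by rewrite sqr_sqrtr // ltW.
have hA1 : 0 < A ^+ 2 + 1 by nra.
set z0 := _ / _.
have hz0 : z0 * (A ^+ 2 + 1) = A * (1 - B) + s by rewrite /z0 mulfVK // gt_eqF.
move=> z0z z1.
have z00 : 0 <= z0 by rewrite /z0 divr_ge0 //; nra.
have zz : 0 <= 1 - z ^+ 2 by nra.
set S := Num.sqrt (1 - z ^+ 2).
have S0 : 0 <= S by exact: sqrtr_ge0.
have S2 : S ^+ 2 = 1 - z ^+ 2 by rewrite sqr_sqrtr.
set P := 1 - B - A * z.
have P0 : 0 < P by rewrite /P; nra.
have P1 : P <= 1 by rewrite /P; nra.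
have S1 : S <= 1 by nra.
(* P^2 - S^2 = (A^2+1)(z-z0)(z-z1) *)
have key : P ^+ 2 - S ^+ 2 >= (z - z0) ^+ 2.
  have e : (A ^+ 2 + 1) * (P ^+ 2 - S ^+ 2) =
     ((A ^+ 2 + 1) * z - (A * (1 - B) + s)) * ((A ^+ 2 + 1) * z - (A * (1 - B) - s)).
    rewrite S2 /P; transitivity (((A ^+ 2 + 1) * z - A * (1 - B)) ^+ 2 - s ^+ 2); last by ring.
    rewrite s2; ring.
  have : (A ^+ 2 + 1) * (z - z0) ^+ 2 <= P ^+ 2 - S ^+ 2.
    suff : (A ^+ 2 + 1) * ((A ^+ 2 + 1) * (z - z0) ^+ 2) <= (A ^+ 2 + 1) * (P ^+ 2 - S ^+ 2).
      by rewrite ler_pM2l.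
    have h1 : A * (1 - B) = z0 * (A ^+ 2 + 1) - s by rewrite hz0; ring.
    rewrite e h1.
    have := mulr_ge0 s0 (mulr_ge0 (ltW hA1) (ltac:(by rewrite subr_ge0) : 0 <= z - z0)).
    nra.
  have := mulr_ge0 (sqr_ge0 A) (sqr_ge0 (z - z0)).
  nra.
have PS : S <= P by nra.
have : 1 - S - A * z - B = P - S by rewrite /P; ring.
move=> ->; nra.
Qed.

Lemma D_cont (A B : R) : continuous (fun z : R => 1 - Num.sqrt (1 - z ^+ 2) - A * z - B).
Proof.
move=> x.
apply: cvgB; last exact: cvg_cst.
apply: cvgB; last first.
  by apply: cvgM; [exact: cvg_cst| exact: cvg_id].
apply: cvgB; first exact: cvg_cst.
apply: continuous_comp; last exact: sqrt_continuous.
apply: cvgB; first exact: cvg_cst.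
by apply: cvgM; exact: cvg_id.
Qed.

Lemma g_int (A B : R) : 0 <= A -> 0 <= B -> A + B < 1 ->
  0 < A ^+ 2 + 2 * B - B ^+ 2 ->
  let z0 := (A * (1 - B) + Num.sqrt (A ^+ 2 + 2 * B - B ^+ 2)) / (A ^+ 2 + 1) in
  z0 < 1 ->
  let g := fun z : R => 1 / (1 - Num.sqrt (1 - z ^+ 2) - A * z - B) in
  (@lebesgue_measure R).-integrable `[1 / 2 + z0 / 2, 1]%classic
           (fun z => (g z)%:E)
  /\ \int[@lebesgue_measure R]_(z in `[1 / 2 + z0 / 2, 1]%classic) g z <= 8 / (1 - z0) ^+ 2.
Proof.
move=> A0 B0 AB disc z0 z01 g.
have z00 : 0 <= z0.
  rewrite /z0 divr_ge0 //; last by nra.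
  by apply: addr_ge0; [nra| exact: sqrtr_ge0].
set D := fun z : R => 1 - Num.sqrt (1 - z ^+ 2) - A * z - B.
set eta := (1 - z0) ^+ 2 / 8.
have eta0 : 0 < eta by rewrite /eta divr_gt0 //; nra.
have Dge : forall z, 1 / 2 + z0 / 2 <= z <= 1 -> eta <= D z.
  move=> z /andP[za z1].
  have H := @D_lower A B z A0 B0 AB disc (_ : z0 <= z) z1.
  rewrite -/z0 in H; have {}H := H ltac:(lra).
  apply: le_trans H; rewrite /eta.
  have : (1 - z0) / 2 <= z - z0 by lra.
  move=> h; have h2 : ((1 - z0) / 2) ^+ 2 <= (z - z0) ^+ 2.
    by rewrite ler_sqr ?nnegrE; lra.
  lra.
set h := fun z : R => 1 / Num.max (D z) eta.
have gh : {in `[1 / 2 + z0 / 2, 1]%classic, h =1 g}.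
  move=> z; rewrite inE /= in_itv /= => /Dge H.
  by rewrite /h /g max_l.
have hc : continuous h.
  move=> x; rewrite /h.
  have -> : (fun z => 1 / Num.max (D z) eta) = (fun z => (Num.max (D z) eta)^-1).
    by apply: funext => z; rewrite div1r.
  apply: (continuousV (s := fun z => Num.max (D z) eta)).
    by apply: lt0r_neq0; apply: lt_le_trans eta0 _; rewrite le_max lexx orbT.
  exact: (continuous_max (D_cont A B x) (@cvg_cst _ _ _ _ _)).
have hint : (@lebesgue_measure R).-integrable `[1 / 2 + z0 / 2, 1]%classic (EFin \o h).
  apply: continuous_compact_integrable; first exact: segment_compact.
  exact: continuous_subspaceT.
have gint : (@lebesgue_measure R).-integrable `[1 / 2 + z0 / 2, 1]%classic (fun z => (g z)%:E).
  have mI : measurable (`[1 / 2 + z0 / 2, 1]%classic : set R) by exact: measurable_itv.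
  have := @eq_integrable _ _ _ (@lebesgue_measure R) _ mI (EFin \o h) (fun z => (g z)%:E).
  apply => //.
  by move=> z zi /=; rewrite gh.
split => //.
have cint : (@lebesgue_measure R).-integrable `[1 / 2 + z0 / 2, 1]%classic
   (EFin \o cst (8 / (1 - z0) ^+ 2)).
  apply: continuous_compact_integrable; first exact: segment_compact.
  apply: continuous_subspaceT => x; exact: cvg_cst.
apply: le_trans (le_Rintegral _ gint cint _) _ => //.
  move=> z; rewrite /= in_itv /= => /andP[za z1].
  have := Dge z; rewrite za z1 => /(_ isT) H.
  have Dp : 0 < D z by exact: lt_le_trans eta0 H.
  rewrite /g -/(D z) ler_pdivrMr //.
  have e1 : 8 / (1 - z0) ^+ 2 * eta = 1.
    rewrite /eta; field; apply/eqP; nra.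
  have M0 : 0 <= 8 / (1 - z0) ^+ 2 by rewrite divr_ge0 // sqr_ge0.
  nra.
rewrite Rintegral_cst; last exact: measurable_itv.
rewrite /= lebesgue_measure_itv /=.
have M0 : 0 <= 8 / (1 - z0) ^+ 2 by rewrite divr_ge0 // sqr_ge0.
case: ifP => _ /=; last by rewrite mulr0.
nra.
Qed.
Lemma z0_bound (A B c del : R) : 0 < c -> c <= A -> A <= c + del -> 0 <= B -> B <= del -> del <= 1 ->
  0 < A ^+ 2 + 2 * B - B ^+ 2 /\
  (A * (1 - B) + Num.sqrt (A ^+ 2 + 2 * B - B ^+ 2)) / (A ^+ 2 + 1)
    <= 2 * c / (c ^+ 2 + 1) + del * (2 + 1 / c).
Proof.
move=> c0 cA Ac B0 B1 d1.
have disc0 : 0 < A ^+ 2 + 2 * B - B ^+ 2 by nra.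
split => //.
set sq := Num.sqrt (A ^+ 2 + 2 * B - B ^+ 2).
have sq0 : 0 <= sq by exact: sqrtr_ge0.
have sq2 : sq ^+ 2 = A ^+ 2 + 2 * B - B ^+ 2 by rewrite sqr_sqrtr // ltW.
set t := del / c.
have t0 : 0 <= t by rewrite /t; apply: divr_ge0; lra.
have dt : del = c * t by rewrite /t mulrC mulfVK // gt_eqF.
have sqle : sq <= c + del + t.
  have : sq ^+ 2 <= (c + del + t) ^+ 2.
    rewrite sq2.
    have hA : A ^+ 2 <= (c + del) ^+ 2 by rewrite ler_sqr ?nnegrE; lra.
    have hB : 2 * B - B ^+ 2 <= 2 * del by nra.
    have : 0 <= t * (2 * (c + del) + t) - 2 * del.
      rewrite dt; have := mulr_ge0 t0 (ltW c0); have := mulr_ge0 t0 t0; nra.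
    nra.
  have : 0 <= c + del + t by lra.
  nra.
have c21 : 0 < c ^+ 2 + 1 by nra.
rewrite ler_pdivrMr; last by nra.
have LE : del * (2 + 1 / c) = 2 * del + t by rewrite /t; field; apply/eqP; lra.
have zlE : 2 * c / (c ^+ 2 + 1) * (c ^+ 2 + 1) = 2 * c by rewrite mulfVK // gt_eqF.
have hnum : A * (1 - B) + sq <= 2 * c + 2 * del + t by nra.
rewrite LE.
set zl := 2 * c / (c ^+ 2 + 1).
have zl0 : 0 <= zl by rewrite /zl divr_ge0 //; nra.
have A2 : c ^+ 2 <= A ^+ 2 by nra.
have p1 := mulr_ge0 zl0 (ltac:(lra) : 0 <= A ^+ 2 - c ^+ 2).
have p2 := mulr_ge0 (ltac:(lra) : 0 <= 2 * del + t) (sqr_ge0 A).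
rewrite /zl in p1 zlE *.
nra.
Qed.
Lemma ratio_bound (s I2 C1 J K R0 w gam Q0 : R) : 0 < R0 -> 0 < I2 -> 0 <= w -> w <= 1 ->
  1 <= s -> 0 <= K -> 0 < gam -> w * R0 * I2 <= J - gam / 2 ->
  2 * (K + R0 * `|C1|) < s * gam -> s ^+ 2 * J - s * K <= Q0 ->
  w * (R0 * (s ^+ 2 * I2 + C1)) < Q0.
Proof.
move=> R00 I20 w0 w1 s1 K0 g0 hw hs hQ.
have hC : w * C1 <= `|C1|.
  have [hC|hC] := lerP 0 C1.
    by rewrite ger0_norm //; nra.
  have : 0 < `|C1| by rewrite normr_gt0 ltr0_neq0.
  nra.
have h1 : w * (R0 * C1) <= R0 * `|C1|.
  by rewrite mulrCA ler_pM2l.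
have h4 : 0 <= R0 * `|C1| by apply: mulr_ge0; [exact: ltW | exact: normr_ge0].
have s20 : 0 <= s ^+ 2 by rewrite sqr_ge0.
have h2 : w * R0 * I2 * s ^+ 2 <= (J - gam / 2) * s ^+ 2 by rewrite ler_wpM2r.
have h3 : s * (K + R0 * `|C1|) < s ^+ 2 * (gam / 2).
  have : K + R0 * `|C1| < s * (gam / 2) by lra.
  move=> h; have s0 : 0 < s by lra.
  rewrite expr2 -mulrA ltr_pM2l //.
have h5 : R0 * `|C1| <= s * (R0 * `|C1|) by rewrite ler_peMl.
have e : w * (R0 * (s ^+ 2 * I2 + C1)) = w * R0 * I2 * s ^+ 2 + w * (R0 * C1) by ring.
rewrite e.
have e2 : s * (K + R0 * `|C1|) = s * K + s * (R0 * `|C1|) by ring.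
lra.
Qed.
Lemma real_main (b k c R0 I2 J C0 K : R) : 0 < b -> 0 < k -> 0 < c -> c < 1 ->
  0 < R0 -> 0 < I2 -> 0 <= K ->
  R0 * ((c + 1) ^+ 2 / (2 * (c ^+ 2 + 1))) * I2 < J ->
  exists Rbar : R, R0 < Rbar /\
  exists S : R, forall sigma : R, 0 < sigma -> S < sigma ->
  forall E Q0 : R, E = sigma ^+ 2 * I2 + C0 -> sigma ^+ 2 * J - sigma * K <= Q0 ->
    let A := c * (1 + 3 * b * Rbar ^+ 3 / (E + b * Rbar ^+ 3)) in
    let B := k * Rbar ^+ 3 / (E + b * Rbar ^+ 3) in
    let z0 := (A * (1 - B) + Num.sqrt (A ^+ 2 + 2 * B - B ^+ 2)) / (A ^+ 2 + 1) in
    let g := fun z : R => 1 / (1 - Num.sqrt (1 - z ^+ 2) - A * z - B) in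
    [/\ 0 < A ^+ 2 + 2 * B - B ^+ 2,
        A + B < 1,
        z0 < 1,
        (@lebesgue_measure R).-integrable `[1 / 2 + z0 / 2, 1]%classic
           (fun z => (g z)%:E)
        /\ \int[@lebesgue_measure R]_(z in `[1 / 2 + z0 / 2, 1]%classic) g z
           < ln (Rbar / R0)
      & Q0 / (R0 * (E + b * R0 ^+ 3)) > z0 / 2 + 1 / 2].
Proof.
move=> b0 k0 c0 c1 R00 I20 K0 hJ.
set kap := (c + 1) ^+ 2 / (2 * (c ^+ 2 + 1)).
set zl := 2 * c / (c ^+ 2 + 1).
have c21 : 0 < c ^+ 2 + 1 by nra.
have kapE : kap = 1 / 2 + zl / 2.
  by rewrite /kap /zl; field; apply/eqP; nra.
have zl1 : zl < 1.
  by rewrite /zl ltr_pdivrMr //; nra.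
have zl0 : 0 <= zl by rewrite /zl divr_ge0 //; nra.
set gam := J - R0 * kap * I2.
have gam0 : 0 < gam by rewrite /gam /kap; lra.
set L := 2 + 1 / c.
have L0 : 0 < L by rewrite /L; have := divr_gt0 ltr01 c0; lra.
set del := Num.min (Num.min ((1 - c) / 4) (gam / (R0 * I2 * L)))
                   (Num.min ((1 - zl) / (2 * L)) 1).
have del0 : 0 < del.
  rewrite /del !lt_min; apply/andP; split; apply/andP; split.
  - lra.
  - by apply: divr_gt0 => //; apply: mulr_gt0 => //; apply: mulr_gt0.
  - by apply: divr_gt0; lra.
  - exact: ltr01.
have del1 : del <= (1 - c) / 4 by rewrite /del !ge_min lexx.
have del2 : del <= gam / (R0 * I2 * L) by rewrite /del !ge_min lexx orbT.
have del3 : del <= (1 - zl) / (2 * L) by rewrite /del !ge_min lexx !orbT.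
have del4 : del <= 1 by rewrite /del !ge_min lexx !orbT.
have del2' : del * L * R0 * I2 <= gam.
  move: del2; rewrite ler_pdivlMr; last by apply: mulr_gt0 => //; apply: mulr_gt0.
  by move=> h; apply: le_trans h; rewrite le_eqVlt; apply/orP; left; apply/eqP; ring.
have del3' : del * L <= (1 - zl) / 2.
  move: del3; rewrite ler_pdivlMr; last by lra.
  lra.
set M := 32 / (1 - zl) ^+ 2.
have M0 : 0 < M by rewrite /M divr_gt0 //; nra.
exists (R0 * expR (M + 1)).
have eM : 1 < expR (M + 1).
  have := expR_ge1Dx (M + 1); lra.
split; first by nra.
set Rb := R0 * expR (M + 1).
have Rb0 : 0 < Rb by rewrite /Rb mulr_gt0 // expR_gt0.
have Rb30 : 0 < Rb ^+ 3 by rewrite exprn_gt0.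
set T := (3 * b * Rb ^+ 3 + k * Rb ^+ 3) / del.
have T0 : 0 < T.
  by rewrite /T divr_gt0 //; apply: addr_gt0; apply: mulr_gt0 => //; apply: mulr_gt0.
set C1 := C0 + b * R0 ^+ 3.
exists (1 + (`|T| + `|C0|) / I2 + 2 * (K + R0 * `|C1|) / gam).
move=> s s0 sS E Q0 EE QQ A B z0 g.
have t1 : 0 <= (`|T| + `|C0|) / I2 by clear -I20; apply: divr_ge0; [exact: addr_ge0 | exact: ltW].
have t2 : 0 <= 2 * (K + R0 * `|C1|) / gam.
  clear -gam0 K0 R00; apply: divr_ge0; last exact: ltW.
  by apply: mulr_ge0 => //; apply: addr_ge0 => //; apply: mulr_ge0 => //; exact: ltW.
have s1 : 1 < s by clear -t1 t2 sS; lra.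
have sA : `|T| + `|C0| < s * I2 by clear -t1 t2 sS I20; rewrite -ltr_pdivrMr //; lra.
have sB : 2 * (K + R0 * `|C1|) < s * gam by clear -t1 t2 sS gam0; rewrite -ltr_pdivrMr //; lra.
have EgT : T <= E.
  clear -sA s1 EE I20.
  have n1 := ler_norm T.
  have n2 : - C0 <= `|C0| by rewrite -normrN ler_norm.
  have n3 : s * I2 <= s ^+ 2 * I2.
    rewrite ler_pM2r // expr2 ler_peMl //; lra.
  rewrite EE; lra.
set W := E + b * Rb ^+ 3.
have bR : 0 < b * Rb ^+ 3 by clear -b0 Rb30; rewrite mulr_gt0.
have kR : 0 < k * Rb ^+ 3 by clear -k0 Rb30; rewrite mulr_gt0.
have W0 : T <= W by clear -EgT bR; rewrite /W; lra.
have Wp : 0 < W by exact: lt_le_trans T0 W0.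
have delT : del * T = 3 * b * Rb ^+ 3 + k * Rb ^+ 3.
  by clear -del0; rewrite /T mulrC mulfVK // gt_eqF.
have delW : del * T <= del * W by clear -del0 W0; rewrite ler_pM2l.
set u := 3 * b * Rb ^+ 3 / W.
have u0 : 0 <= u.
  clear -Wp bR; rewrite /u; apply: divr_ge0; last exact: ltW.
  rewrite -mulrA; apply: mulr_ge0; [lra| exact: ltW].
have u1 : u <= del.
  by clear -Wp delT delW kR; rewrite /u ler_pdivrMr // mulrC; lra.
have B0 : 0 <= B by clear -Wp kR; rewrite /B -/W; apply: divr_ge0; exact: ltW.
have B1 : B <= del.
  by clear -Wp delT delW bR; rewrite /B -/W ler_pdivrMr // mulrC; lra.
have AE : A = c + c * u by rewrite /A -/W /u; ring.
have cu : c * u <= u by clear -u0 c1; rewrite ler_piMl //; lra.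
have cA : c <= A by clear -AE c0 u0; rewrite AE; have := mulr_ge0 (ltW c0) u0; lra.
have Ac : A <= c + del by clear -AE cu u1; rewrite AE; lra.
have [disc0 z0le] := @z0_bound A B c del c0 cA Ac B0 B1 del4.
rewrite -/z0 -/zl -/L in z0le.
have AB1 : A + B < 1 by clear -Ac B1 del1 c1; lra.
have z01 : z0 < 1 by clear -z0le del3' zl1; lra.
have A0 : 0 <= A by clear -cA c0; lra.
split => //.
- have [gi gb] := @g_int A B A0 B0 AB1 disc0 z01.
  split => //.
  apply: le_lt_trans gb _.
  have -> : Rb / R0 = expR (M + 1) by clear -R00; rewrite /Rb [R0 * _]mulrC mulfK // gt_eqF.
  rewrite expRK.
  clear -z0le del3' zl1 M0.
  have h1 : (1 - zl) / 2 <= 1 - z0 by lra.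
  have h2 : ((1 - zl) / 2) ^+ 2 <= (1 - z0) ^+ 2 by rewrite ler_sqr ?nnegrE; lra.
  have h3 : 8 / (1 - z0) ^+ 2 <= M.
    have p0 : 0 < ((1 - zl) / 2) ^+ 2 by rewrite exprn_gt0 //; lra.
    have p1 : 0 < (1 - z0) ^+ 2 by exact: lt_le_trans p0 h2.
    rewrite /M ler_pdivrMr // mulrC mulrA ler_pdivlMr; last by rewrite exprn_gt0 //; lra.
    have e : ((1 - zl) / 2) ^+ 2 * 4 = (1 - zl) ^+ 2 by rewrite expr2; field.
    rewrite -e; lra.
  lra.
- set V := E + b * R0 ^+ 3.
  have VE : V = s ^+ 2 * I2 + C1 by rewrite /V EE /C1; ring.
  have bR0 : 0 < b * R0 ^+ 3 by clear -b0 R00; rewrite mulr_gt0 // exprn_gt0.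
  have V0 : 0 < V by clear -EgT T0 bR0; rewrite /V; lra.
  rewrite ltr_pdivlMr; last by rewrite mulr_gt0.
  have z00 : 0 <= z0.
    clear -A0 B1 del4 disc0; rewrite /z0; apply: divr_ge0; last by rewrite addr_ge0 // sqr_ge0.
    by apply: addr_ge0; [apply: mulr_ge0; lra | exact: sqrtr_ge0].
  set w := z0 / 2 + 1 / 2.
  have w0 : 0 <= w by clear -z00; rewrite /w; lra.
  have w1 : w <= 1 by clear -z01; rewrite /w; lra.
  have wk : w <= kap + del * L / 2 by clear -z0le kapE; rewrite /w kapE; lra.
  have h1 : w * R0 * I2 <= J - gam / 2.
    clear -wk R00 I20 del2'.
    have RI : 0 < R0 * I2 by rewrite mulr_gt0.
    have : w * (R0 * I2) <= (kap + del * L / 2) * (R0 * I2) by rewrite ler_pM2r.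
    have e : (kap + del * L / 2) * (R0 * I2) = R0 * kap * I2 + (del * L * R0 * I2) / 2 by ring.
    have eg : gam = J - R0 * kap * I2 by [].
    rewrite e mulrA => H; lra.
  rewrite VE; exact: (@ratio_bound s I2 C1 J K R0 w gam Q0 R00 I20 w0 w1 (ltW s1) K0 gam0 h1 sB QQ).
Qed.
End Real.


Lemma fst_cont (T U : topologicalType) : continuous (@fst T U).
Proof. move=> [x y]; exact: cvg_fst. Qed.
Lemma snd_cont (T U : topologicalType) : continuous (@snd T U).
Proof. move=> [x y]; exact: cvg_snd. Qed.
Section M.
Variable R : realType.
Local Notation T3 := (R * R * R)%type.

Definition box3 (q1 q2 q3 r : R) : set T3 :=
  (`]q1 - r, q1 + r[ `*` `]q2 - r, q2 + r[) `*` `]q3 - r, q3 + r[.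

Lemma box3_measurable q1 q2 q3 r : measurable (box3 q1 q2 q3 r).
Proof. by apply: measurableX; [apply: measurableX|]; exact: measurable_itv. Qed.

Lemma open3_measurable (U : set T3) : open U -> measurable U.
Proof.
move=> oU.
pose F := fun q1 : rat => \bigcup_(q2 : rat) \bigcup_(q3 : rat) \bigcup_(r : rat)
   (if pselect (box3 (ratr q1) (ratr q2) (ratr q3) (ratr r) `<=` U)
    then box3 (ratr q1) (ratr q2) (ratr q3) (ratr r) else set0).
have -> : U = \bigcup_q1 F q1.
  apply/seteqP; split; last first.
    move=> x [q1 _ [q2 _ [q3 _ [r _]]]].
    by case: pselect => // H /H.
  move=> x Ux.
  have : nbhs x U by rewrite nbhsE /=; exists U.
  rewrite -nbhs_ballE /nbhs_ball /nbhs_ball_ => -[e e0 xeU].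
  have /rat_in_itvoo[r rI] : (0 < e / 2)%R by rewrite divr_gt0.
  move: rI; rewrite in_itv /= => /andP[r0 re].
  have [q1 q1I] : exists q, ratr q \in `](x.1.1 - ratr r), (x.1.1 + ratr r)[.
    by apply: rat_in_itvoo; lra.
  have [q2 q2I] : exists q, ratr q \in `](x.1.2 - ratr r), (x.1.2 + ratr r)[.
    by apply: rat_in_itvoo; lra.
  have [q3 q3I] : exists q, ratr q \in `](x.2 - ratr r), (x.2 + ratr r)[.
    by apply: rat_in_itvoo; lra.
  move: q1I q2I q3I; rewrite !in_itv /= => /andP[a1 b1] /andP[a2 b2] /andP[a3 b3].
  exists q1 => //; exists q2 => //; exists q3 => //; exists r => //.
  case: pselect => H; last first.
    exfalso; apply: H => y; rewrite /box3 /= !in_itv /=.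
    move=> [[/andP[c1 d1] /andP[c2 d2]] /andP[c3 d3]].
    apply: xeU; rewrite /ball /= /prod_ball /= /ball /=.
    split; [rewrite /prod_ball /ball /=; split|]; rewrite ?/ball_ /= ltr_norml; apply/andP; split; lra.
  rewrite /box3 /= !in_itv /=.
  split; [split|]; apply/andP; split; lra.
apply: bigcupT_measurable_rat => q1.
apply: bigcupT_measurable_rat => q2.
apply: bigcupT_measurable_rat => q3.
apply: bigcupT_measurable_rat => r.
by case: pselect => HH; [exact: box3_measurable | exact: measurable0].
Qed.

Lemma cont3_measurable (f : T3 -> R) : continuous f -> measurable_fun setT f.
Proof.
move=> /continuousP cf; apply: (measurability _ (measurable_realfun.RGenOpens.measurableE R)).
move=> _ [_ [a [b ->] <-]]; rewrite setTI.
apply: open3_measurable; apply: cf; exact: interval_open.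
Qed.

Lemma c11 : continuous (fun x : T3 => x.1.1).
Proof. move=> x; exact: (continuous_comp (@fst_cont _ _ x) (@fst_cont _ _ x.1)). Qed.
Lemma c12 : continuous (fun x : T3 => x.1.2).
Proof. move=> x; exact: (continuous_comp (@fst_cont _ _ x) (@snd_cont _ _ x.1)). Qed.
Lemma c2 : continuous (fun x : T3 => x.2).
Proof. exact: snd_cont. Qed.
Lemma contD (f g : T3 -> R) : continuous f -> continuous g -> continuous (fun x => f x + g x).
Proof. by move=> hf hg x; apply: cvgD; [exact: hf | exact: hg]. Qed.
Lemma contB (f g : T3 -> R) : continuous f -> continuous g -> continuous (fun x => f x - g x).
Proof. by move=> hf hg x; apply: cvgB; [exact: hf | exact: hg]. Qed.
Lemma contM (f g : T3 -> R) : continuous f -> continuous g -> continuous (fun x => f x * g x).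
Proof. by move=> hf hg x; apply: cvgM; [exact: hf | exact: hg]. Qed.
Lemma contC (a : R) : continuous (fun _ : T3 => a).
Proof. by move=> x; exact: cvg_cst. Qed.
Lemma contS (f : T3 -> R) : continuous f -> continuous (fun x => Num.sqrt (f x)).
Proof. move=> hf x; exact: (continuous_comp (hf x) (@sqrt_continuous R (f x))). Qed.
Lemma contU (u : T3 -> T3) (f : T3 -> R) : continuous u -> continuous f -> continuous (fun x => f (u x)).
Proof. move=> hu hf x; exact: (continuous_comp (hu x) (hf (u x))). Qed.

Lemma dot_cont (f g : T3 -> T3) : continuous f -> continuous g -> continuous (fun x => dot3 (f x) (g x)).
Proof.
move=> hf hg; rewrite /dot3.
apply: contD; first apply: contD.
- by apply: contM; [exact: (@contU _ _ hf c11) | exact: (@contU _ _ hg c11)].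
- by apply: contM; [exact: (@contU _ _ hf c12) | exact: (@contU _ _ hg c12)].
- by apply: contM; [exact: (@contU _ _ hf c2) | exact: (@contU _ _ hg c2)].
Qed.

Lemma enorm_cont (f : T3 -> T3) : continuous f -> continuous (fun x => enorm3 (f x)).
Proof. by move=> hf; rewrite /enorm3; apply: contS; exact: dot_cont. Qed.

Lemma id_cont : continuous (fun x : T3 => x).
Proof. by move=> x; exact: cvg_id. Qed.

Lemma comp_le_enorm (x : R3 R) :
  [/\ `|x.1.1| <= enorm3 x, `|x.1.2| <= enorm3 x & `|x.2| <= enorm3 x].
Proof.
rewrite /enorm3 /dot3 -!sqrtr_sqr.
have h1 := sqr_ge0 x.1.1; have h2 := sqr_ge0 x.1.2; have h3 := sqr_ge0 x.2.
by split; rewrite ler_sqrt; rewrite ?expr2 in h1 h2 h3 *; lra.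
Qed.

Lemma ball3_measurable r : measurable (ball3 r : set T3).
Proof.
have := @cont3_measurable _ (@enorm_cont _ id_cont) measurableT _ (measurable_itv `]-oo, r[).
rewrite setTI.
have -> : (fun x : T3 => enorm3 x) @^-1` [set` `]-oo, r[] = ball3 r.
  by apply/seteqP; split => x /=; rewrite in_itv /=.
by [].
Qed.

Lemma ball3_box r : ball3 r `<=` box3 0 0 0 r.
Proof.
move=> x; rewrite /ball3 /box3 /= !in_itv /= !add0r.
case: (comp_le_enorm x) => h1 h2 h3 hx.
by split; [split|]; rewrite -ltr_norml; lra.
Qed.

Lemma leb3_ball_fin r : (leb3 R (ball3 r) < +oo)%E.
Proof.
apply: (@le_lt_trans _ _ (leb3 R (box3 0 0 0 r))).
  apply: le_measure; rewrite ?inE; [exact: ball3_measurable | exact: box3_measurable | exact: ball3_box].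
rewrite /leb3 /box3 product_measure1E; last exact: measurable_itv.
  set X := (X in (X * _)%E).
  have -> : X = (@lebesgue_measure R `](0 - r)%R, (0 + r)%R[%classic * @lebesgue_measure R `](0 - r)%R, (0 + r)%R[%classic)%E.
    by rewrite /X; apply: product_measure1E; exact: measurable_itv.
  rewrite !lebesgue_measure_itv /=.
  set Y := (X in (_ * X < _)%E).
  have [v ->] : exists v : R, Y = v%:E.
    have := @lebesgue_measure_itv R `](0 - r)%R, (0 + r)%R[; rewrite /= => HY.
    move: HY; case: ifP => _ HY; [exists (0 + r - (0 - r)) | exists 0];
      rewrite /Y; (etransitivity; first exact: HY) => //.
  by case: ifP => _; rewrite ?mul0e ?mule0 -?EFinB -?EFinD -?EFinM ?ltry.
by apply: measurableX; exact: measurable_itv.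
Qed.


Lemma u_zero_out (u : T3 -> T3) r : supported_in u (ball3 r) ->
  forall x, ~ ball3 r x -> u x = 0.
Proof.
move=> hs x nx; apply/eqP; apply/negPn/negP => ux.
by apply: nx; apply: hs; apply: subset_closure; exact: ux.
Qed.

Definition K3 (r : R) : set T3 := (`[- r, r] `*` `[- r, r]) `*` `[- r, r].

Lemma K3_compact r : compact (K3 r).
Proof. by apply: compact_setX; [apply: compact_setX|]; exact: segment_compact. Qed.

Lemma ball3_K3 r x : ball3 r x -> K3 r x.
Proof.
rewrite /ball3 /K3 /= !in_itv /=.
case: (comp_le_enorm x) => h1 h2 h3 hx.
by split; [split|]; rewrite -ler_norml; lra.
Qed.

Lemma cont_bound (f : T3 -> R) r : continuous f ->
  exists M, 0 <= M /\ forall x, K3 r x -> `|f x| <= M.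
Proof.
move=> hf.
have /compact_bounded[M [_ mrt]] := continuous_compact (continuous_subspaceT hf) (K3_compact r).
exists (`|M| + 1); split; first by have := normr_ge0 M; lra.
move=> x Kx; apply: (mrt (`|M| + 1)); last by exists x.
by have := ler_norm M; lra.
Qed.

Lemma u_bound (u : T3 -> T3) r : continuous u -> supported_in u (ball3 r) ->
  exists M, 0 <= M /\ forall x,
    [/\ `|(u x).1.1| <= M, `|(u x).1.2| <= M & `|(u x).2| <= M].
Proof.
move=> hu hs.
have [M1 [M10 h1]] := @cont_bound _ r (@contU _ _ hu c11).
have [M2 [M20 h2]] := @cont_bound _ r (@contU _ _ hu c12).
have [M3 [M30 h3]] := @cont_bound _ r (@contU _ _ hu c2).
exists (M1 + M2 + M3); split; first lra.
move=> x; have [Kx|Kx] := pselect (K3 r x).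
  by have := h1 _ Kx; have := h2 _ Kx; have := h3 _ Kx; split; lra.
have -> : u x = 0.
  by apply: (@u_zero_out _ _ hs) => bx; apply: Kx; exact: (@ball3_K3 r x bx).
by rewrite /= normr0; split; lra.
Qed.

Lemma sc11 (s : R) (v : T3) : (s *: v).1.1 = s * v.1.1. Proof. by []. Qed.
Lemma sc12 (s : R) (v : T3) : (s *: v).1.2 = s * v.1.2. Proof. by []. Qed.
Lemma sc2 (s : R) (v : T3) : (s *: v).2 = s * v.2. Proof. by []. Qed.

Lemma dot_scale (x v : T3) (s : R) : dot3 x (s *: v) = s * dot3 x v.
Proof. by rewrite /dot3 sc11 sc12 sc2; ring. Qed.

Lemma dot_ge0 (v : T3) : 0 <= dot3 v v.
Proof. by rewrite /dot3; nra. Qed.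

Lemma enorm2 (v : T3) : enorm3 v ^+ 2 = dot3 v v.
Proof. by rewrite /enorm3 sqr_sqrtr // dot_ge0. Qed.

Lemma enorm_ge0 (v : T3) : 0 <= enorm3 v.
Proof. exact: sqrtr_ge0. Qed.

Lemma enorm_scale2 (v : T3) (s : R) : enorm3 (s *: v) ^+ 2 = s ^+ 2 * enorm3 v ^+ 2.
Proof. by rewrite !enorm2 /dot3 sc11 sc12 sc2; ring. Qed.

Lemma CS3 (x v : T3) : dot3 x v <= enorm3 x * enorm3 v.
Proof.
have h : dot3 x v ^+ 2 <= (enorm3 x * enorm3 v) ^+ 2.
  rewrite exprMn !enorm2 /dot3 -subr_ge0.
  have -> : (x.1.1 * x.1.1 + x.1.2 * x.1.2 + x.2 * x.2) * (v.1.1 * v.1.1 + v.1.2 * v.1.2 + v.2 * v.2) -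
    (x.1.1 * v.1.1 + x.1.2 * v.1.2 + x.2 * v.2) ^+ 2 =
    (x.1.1 * v.1.2 - x.1.2 * v.1.1) ^+ 2 + (x.1.1 * v.2 - x.2 * v.1.1) ^+ 2 +
    (x.1.2 * v.2 - x.2 * v.1.2) ^+ 2 by ring.
  by rewrite !addr_ge0 // sqr_ge0.
have := mulr_ge0 (enorm_ge0 x) (enorm_ge0 v).
nra.
Qed.

Lemma dot_bound (x v : T3) (r M : R) : ball3 r x ->
  `|v.1.1| <= M -> `|v.1.2| <= M -> `|v.2| <= M -> `|dot3 x v| <= 3 * r * M.
Proof.
move=> bx h1 h2 h3.
have [a1 a2 a3] := comp_le_enorm x.
move: bx; rewrite /ball3 /= => bx.
rewrite /dot3.
have e1 : `|x.1.1 * v.1.1| <= r * M by rewrite normrM; apply: ler_pM => //; lra.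
have e2 : `|x.1.2 * v.1.2| <= r * M by rewrite normrM; apply: ler_pM => //; lra.
have e3 : `|x.2 * v.2| <= r * M by rewrite normrM; apply: ler_pM => //; lra.
have := ler_normD (x.1.1 * v.1.1 + x.1.2 * v.1.2) (x.2 * v.2).
have := ler_normD (x.1.1 * v.1.1) (x.1.2 * v.1.2).
lra.
Qed.

Lemma enorm2_bound (v : T3) (M : R) :
  `|v.1.1| <= M -> `|v.1.2| <= M -> `|v.2| <= M -> enorm3 v ^+ 2 <= 3 * M ^+ 2.
Proof.
move=> h1 h2 h3; rewrite enorm2 /dot3.
move: h1 h2 h3; rewrite !ler_norml => /andP[a1 b1] /andP[a2 b2] /andP[a3 b3].
nra.
Qed.

Lemma sqrt_le1 (y : R) : 0 <= y -> Num.sqrt y <= 1 + y.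
Proof.
move=> y0; have s0 := sqrtr_ge0 y; have s2 : Num.sqrt y ^+ 2 = y by rewrite sqr_sqrtr.
nra.
Qed.

End M.


Notation T3m R := (measurableTypeR R * measurableTypeR R * measurableTypeR R)%type.
Lemma b3m (R : realType) (r : R) : measurable (ball3 r : set (T3m R)).
Proof. exact: ball3_measurable. Qed.
Lemma c3m (R : realType) (f : R * R * R -> R) : continuous f -> measurable_fun (setT : set (T3m R)) f.
Proof. move=> hf. exact: (@cont3_measurable R f hf). Qed.

Lemma int_bound (R : realType) (D : set (T3m R)) (w f : R3 R -> R) (K : R) : measurable D ->
  (leb3 R).-integrable D (fun x => (w x)%:E) -> measurable_fun D f ->
  (forall x, D x -> `|f x| <= K * w x) -> (leb3 R).-integrable D (fun x => (f x)%:E).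
Proof.
move=> mD iw mf hb.
apply: (@le_integrable _ _ _ (leb3 R) D mD _ (fun x => (K * w x)%:E)).
- exact/measurable_EFinP.
- move=> x Dx; rewrite /= lee_fin.
  by apply: le_trans (hb x Dx) _; exact: ler_norm.
- have := integrableZl mD K iw.
  by apply: eq_integrable => // x _; rewrite EFinM.
Qed.

Lemma intZ (R : realType) (D : set (T3m R)) (f : R3 R -> R) (k : R) : measurable D ->
  (leb3 R).-integrable D (fun x => (f x)%:E) -> (leb3 R).-integrable D (fun x => (k * f x)%:E).
Proof.
move=> mD iw; have := integrableZl mD k iw.
by apply: eq_integrable => // x _; rewrite EFinM.
Qed.

Lemma intB (R : realType) (D : set (T3m R)) (f g : R3 R -> R) : measurable D ->
  (leb3 R).-integrable D (fun x => (f x)%:E) -> (leb3 R).-integrable D (fun x => (g x)%:E) ->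
  (leb3 R).-integrable D (fun x => (f x - g x)%:E).
Proof.
move=> mD i1 i2; have := integrableB mD i1 i2.
by apply: eq_integrable => // x _; rewrite EFinB.
Qed.

Lemma intD (R : realType) (D : set (T3m R)) (f g : R3 R -> R) : measurable D ->
  (leb3 R).-integrable D (fun x => (f x)%:E) -> (leb3 R).-integrable D (fun x => (g x)%:E) ->
  (leb3 R).-integrable D (fun x => (f x + g x)%:E).
Proof.
move=> mD i1 i2; have := integrableD mD i1 i2.
by apply: eq_integrable => // x _; rewrite EFinD.
Qed.

Lemma qpt (R : realType) (s w e d K0 : R) : 0 < s -> 0 < w -> 0 <= e -> `|d| <= K0 ->
  s ^+ 2 * (d * e * w) - s * K0 * w <= s * d * Num.sqrt (1 + s ^+ 2 * e ^+ 2) * w.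
Proof.
move=> s0 w0 e0 dK.
set q := Num.sqrt _.
have q0 : 0 <= q by exact: sqrtr_ge0.
have se0 : 0 <= s * e by rewrite mulr_ge0 // ltW.
have q2 : q ^+ 2 = 1 + (s * e) ^+ 2 by rewrite /q sqr_sqrtr ?exprMn //; nra.
have h1 : s * e <= q by nra.
have h2 : q <= s * e + 1 by nra.
have h3 : - K0 <= d * (q - s * e).
  move: dK; rewrite ler_norml => /andP[a b]; nra.
have sw : 0 < s * w by rewrite mulr_gt0.
have : (s * w) * (- K0) <= (s * w) * (d * (q - s * e)) by rewrite ler_pM2l.
have -> : s ^+ 2 * (d * e * w) - s * K0 * w = s * w * (- K0) + s * w * (d * (s * e)) by ring.
have -> : s * d * q * w = s * w * (d * (q - s * e)) + s * w * (d * (s * e)) by ring.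
lra.
Qed.

Theorem mainTheorem11 (R : realType) (p : R -> R -> R)
  (b k c R0 rhobar : R)
  (hb : 0 < b) (hk : 0 < k) (hc0 : 0 < c) (hc1 : c < 1)
  (hR0 : 0 < R0) (hrhobar : 0 < rhobar)
  (rho n Pi : R3 R -> R) (u1 : R3 R -> R3 R)
  (hpos : forall x, 0 < rho x + p (rho x) (n x) + Pi x)
  (hwint : (leb3 R).-integrable (ball3 R0)
             (fun x => (rho x + p (rho x) (n x) + Pi x)%:E))
  (hrhoint : (leb3 R).-integrable (ball3 R0) (fun x => (rho x)%:E))
  (hsmooth : smooth u1)
  (hsupp : supported_in u1 (ball3 R0))
  (hineq :
     Rintegral (leb3 R) (ball3 R0)
       (fun x => dot3 x (u1 x) * enorm3 (u1 x)
                 * (rho x + p (rho x) (n x) + Pi x))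
     > R0 * ((c + 1) ^+ 2 / (2 * (c ^+ 2 + 1)))
       * Rintegral (leb3 R) (ball3 R0)
           (fun x => enorm3 (u1 x) ^+ 2 * (rho x + p (rho x) (n x) + Pi x))) :
  exists Rbar : R, R0 < Rbar /\
  exists S : R, forall sigma : R, 0 < sigma -> S < sigma ->
    let E := Rintegral (leb3 R) (ball3 R0)
               (fun x => (rho x + p (rho x) (n x) + Pi x)
                           * enorm3 (sigma *: u1 x) ^+ 2
                         + rho x - rhobar) in
    let Q0 := Rintegral (leb3 R) (ball3 R0)
               (fun x => dot3 x (sigma *: u1 x)
                         * Num.sqrt (1 + enorm3 (sigma *: u1 x) ^+ 2)
                         * (rho x + p (rho x) (n x) + Pi x)) in
    let A := c * (1 + 3 * b * Rbar ^+ 3 / (E + b * Rbar ^+ 3)) in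
    let B := k * Rbar ^+ 3 / (E + b * Rbar ^+ 3) in
    let z0 := (A * (1 - B) + Num.sqrt (A ^+ 2 + 2 * B - B ^+ 2)) / (A ^+ 2 + 1) in
    let g := fun z : R => 1 / (1 - Num.sqrt (1 - z ^+ 2) - A * z - B) in
    [/\ 0 < A ^+ 2 + 2 * B - B ^+ 2,
        A + B < 1,
        z0 < 1,
        (@lebesgue_measure R).-integrable `[1 / 2 + z0 / 2, 1]%classic
           (fun z => (g z)%:E)
        /\ Rintegral (@lebesgue_measure R) `[1 / 2 + z0 / 2, 1]%classic g
           < ln (Rbar / R0)
      & Q0 / (R0 * (E + b * R0 ^+ 3)) > z0 / 2 + 1 / 2].
Proof.
pose w := fun x => rho x + p (rho x) (n x) + Pi x.
have mD : measurable (ball3 R0 : set (T3m R)) := @b3m R R0.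
have hu : continuous u1 := fun x => differentiable_continuous (hsmooth [::] x).
have [M [M0 hM]] := @u_bound R u1 R0 hu hsupp.
have mw : measurable_fun (ball3 R0 : set (T3m R)) w.
  by apply/measurable_EFinP; exact: (measurable_int _ hwint).
have mC : forall f : R * R * R -> R, continuous f -> measurable_fun (ball3 R0 : set (T3m R)) f.
  by move=> f hf; apply: measurable_funTS; exact: c3m.
have mCw : forall f : R * R * R -> R, continuous f -> measurable_fun (ball3 R0 : set (T3m R)) (fun x => f x * w x).
  by move=> f hf; apply: measurable_funM => //; exact: mC.
have cE2 : continuous (fun x => enorm3 (u1 x) ^+ 2).
  have -> : (fun x => enorm3 (u1 x) ^+ 2) = (fun x => dot3 (u1 x) (u1 x)).
    by apply: funext => x; rewrite enorm2.
  exact: dot_cont.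
have cJ : continuous (fun x => dot3 x (u1 x) * enorm3 (u1 x)).
  by apply: contM; [exact: (@dot_cont R _ _ (@id_cont R) hu) | exact: enorm_cont].
have bE2 : forall x, enorm3 (u1 x) ^+ 2 <= 3 * M ^+ 2.
  by move=> x; have [h1 h2 h3] := hM x; exact: enorm2_bound.
have bE : forall x, enorm3 (u1 x) <= 1 + 3 * M ^+ 2.
  move=> x; have := @sqrt_le1 R _ (@dot_ge0 R (u1 x)); rewrite -/(enorm3 _).
  by rewrite -enorm2; have := bE2 x; lra.
have bD : forall x, ball3 R0 x -> `|dot3 x (u1 x)| <= 3 * R0 * M.
  by move=> x bx; have [h1 h2 h3] := hM x; exact: dot_bound.
have wp : forall x, 0 < w x := hpos.
have iI2 : (leb3 R).-integrable (ball3 R0) (fun x => (enorm3 (u1 x) ^+ 2 * w x)%:E).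
  apply: (@int_bound R _ w _ (3 * M ^+ 2) mD hwint (mCw _ cE2)) => x _.
  rewrite normrM (gtr0_norm (wp x)) ger0_norm ?sqr_ge0 //.
  by rewrite ler_pM2r.
have iJ : (leb3 R).-integrable (ball3 R0) (fun x => (dot3 x (u1 x) * enorm3 (u1 x) * w x)%:E).
  apply: (@int_bound R _ w _ (3 * R0 * M * (1 + 3 * M ^+ 2)) mD hwint (mCw _ cJ)) => x bx.
  rewrite !normrM (gtr0_norm (wp x)) (ger0_norm (@enorm_ge0 R _)) ler_pM2r //.
  apply: ler_pM; [exact: normr_ge0 | exact: enorm_ge0 | exact: bD | exact: bE].
pose I2 := Rintegral (leb3 R) (ball3 R0) (fun x => enorm3 (u1 x) ^+ 2 * w x).
pose J := Rintegral (leb3 R) (ball3 R0) (fun x => dot3 x (u1 x) * enorm3 (u1 x) * w x).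
have hJ : R0 * ((c + 1) ^+ 2 / (2 * (c ^+ 2 + 1))) * I2 < J := hineq.
have hJle : J <= R0 * I2.
  rewrite /I2 -RintegralZl //.
  apply: le_Rintegral => //; first exact: (@intZ R _ _ R0 mD iI2).
  move=> x bx.
  have e0 := @enorm_ge0 R (u1 x).
  have h1 := @CS3 R x (u1 x).
  have h2 : enorm3 x < R0 := bx.
  have h3 := @enorm_ge0 R x.
  have h4 : dot3 x (u1 x) * enorm3 (u1 x) <= enorm3 x * enorm3 (u1 x) * enorm3 (u1 x).
    exact: ler_wpM2r.
  have h5 : enorm3 x * enorm3 (u1 x) * enorm3 (u1 x) <= R0 * enorm3 (u1 x) ^+ 2.
    rewrite expr2 mulrA; apply: ler_wpM2r => //; apply: ler_wpM2r => //; exact: ltW.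
  have h6 := wp x.
  have : dot3 x (u1 x) * enorm3 (u1 x) * w x <= R0 * enorm3 (u1 x) ^+ 2 * w x.
    by apply: ler_wpM2r; [exact: ltW | exact: le_trans h4 h5].
  by rewrite mulrA.
have I2pos : 0 < I2.
  have c21 : 0 < c ^+ 2 + 1 by nra.
  have k1 : (c + 1) ^+ 2 / (2 * (c ^+ 2 + 1)) < 1.
    rewrite ltr_pdivrMr; last by nra.
    nra.
  set kap := (c + 1) ^+ 2 / (2 * (c ^+ 2 + 1)) in hJ k1.
  have : 0 < R0 * I2 * (1 - kap) by lra.
  have : 0 < 1 - kap by lra.
  move=> h1 h2.
  have h3 : 0 < R0 * I2 by rewrite -(pmulr_lgt0 _ h1).
  by rewrite -(pmulr_rgt0 _ hR0).
have icst : (leb3 R).-integrable (ball3 R0) (fun x => (rhobar)%:E).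
  have bnd : [bounded (fun=> rhobar) x | x in (ball3 R0 : set (T3m R))].
    exists rhobar; split; first exact: num_real.
    by move=> y yr z _; rewrite (gtr0_norm hrhobar); apply: ltW.
  exact: (@measurable_bounded_integrable _ _ _ (leb3 R) (fun=> rhobar) _ mD (@leb3_ball_fin R R0) (measurable_cst _) bnd).
have iC : (leb3 R).-integrable (ball3 R0) (fun x => (rho x - rhobar)%:E).
  exact: intB.
pose C0 := Rintegral (leb3 R) (ball3 R0) (fun x => rho x - rhobar).
pose Wi := Rintegral (leb3 R) (ball3 R0) w.
have Wi0 : 0 <= Wi by apply: Rintegral_ge0 => x _; exact: ltW.
pose K := 3 * R0 * M * Wi.
have K0 : 0 <= K by rewrite /K !mulr_ge0 // ?ltW.
have [Rbar [hRb [S HS]]] := @real_main R b k c R0 I2 J C0 K hb hk hc0 hc1 hR0 I2pos K0 hJ.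
exists Rbar; split => //; exists S => sigma s0 sS E Q0 A B z0 g.
apply: (HS sigma s0 sS E Q0).
- rewrite /E.
  transitivity (Rintegral (leb3 R) (ball3 R0)
     (fun x => sigma ^+ 2 * (enorm3 (u1 x) ^+ 2 * w x) + (rho x - rhobar))).
    by apply: eq_Rintegral => x _; rewrite enorm_scale2 /w; ring.
  rewrite RintegralD //; last exact: intZ.
  by rewrite RintegralZl.
- rewrite /Q0.
  have eqQ : Rintegral (leb3 R) (ball3 R0)
               (fun x => dot3 x (sigma *: u1 x)
                         * Num.sqrt (1 + enorm3 (sigma *: u1 x) ^+ 2)
                         * (rho x + p (rho x) (n x) + Pi x)) =
     Rintegral (leb3 R) (ball3 R0) (fun x =>
        (sigma * dot3 x (u1 x) * Num.sqrt (1 + sigma ^+ 2 * enorm3 (u1 x) ^+ 2)) * w x).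
    by apply: eq_Rintegral => x _; rewrite dot_scale enorm_scale2 /w.
  rewrite eqQ.
  have cQ : continuous (fun x => sigma * dot3 x (u1 x) * Num.sqrt (1 + sigma ^+ 2 * enorm3 (u1 x) ^+ 2)).
    apply: contM; first by apply: contM; [exact: contC | exact: (@dot_cont R _ _ (@id_cont R) hu)].
    apply: contS; apply: contD; first exact: contC.
    by apply: contM; [exact: contC | exact: cE2].
  have iQ : (leb3 R).-integrable (ball3 R0) (fun x =>
        ((sigma * dot3 x (u1 x) * Num.sqrt (1 + sigma ^+ 2 * enorm3 (u1 x) ^+ 2)) * w x)%:E).
    apply: (@int_bound R _ w _ (sigma * (3 * R0 * M) * (2 + sigma ^+ 2 * (3 * M ^+ 2))) mD hwint (mCw _ cQ)) => x bx.
    rewrite normrM (gtr0_norm (wp x)) ler_pM2r //.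
    rewrite !normrM (gtr0_norm s0) (ger0_norm (sqrtr_ge0 _)).
    rewrite -[sigma * `|dot3 x (u1 x)| * _]mulrA -[sigma * (3 * R0 * M) * _]mulrA ler_pM2l //.
    apply: ler_pM; [exact: normr_ge0 | exact: sqrtr_ge0 | exact: bD |].
    have y0 : 0 <= 1 + sigma ^+ 2 * enorm3 (u1 x) ^+ 2.
      by apply: addr_ge0 => //; apply: mulr_ge0; exact: sqr_ge0.
    apply: le_trans (@sqrt_le1 R _ y0) _.
    have := bE2 x; have := sqr_ge0 sigma; nra.
  have iL : (leb3 R).-integrable (ball3 R0) (fun x =>
        (sigma ^+ 2 * (dot3 x (u1 x) * enorm3 (u1 x) * w x) - sigma * (3 * R0 * M) * w x)%:E).
    by apply: intB => //; apply: intZ.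
  apply: le_trans (le_Rintegral mD iL iQ _).
    rewrite RintegralB //; [|exact: intZ|exact: intZ].
    rewrite RintegralZl // RintegralZl //.
    by rewrite le_eqVlt; apply/orP; left; apply/eqP; rewrite /J /K /Wi; ring.
  move=> x bx.
  exact: (@qpt R sigma (w x) (enorm3 (u1 x)) (dot3 x (u1 x)) (3 * R0 * M) s0 (wp x) (@enorm_ge0 R _) (bD x bx)).
Qed.
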